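(* There exists a semifilter $\mathcal{S}$ that is homeomorphic to $\mathbf{S}$, where $\mathbf{S}$ is the (unique up to homeomorphism) zero-dimensional space that is the union of a completely metrizable subspace and a $\sigma$-compact subspace, is nowhere $\sigma$-compact, and is nowhere the union of a completely metrizable subspace and a countable subspace.
   Context: All spaces are separable metrizable. For a topological property $\mathcal{P}$, a space $X$ is nowhere $\mathcal{P}$ if $X$ is non-empty and no non-empty open subspace of $X$ has $\mathcal{P}$. It is known (van Mill) that a zero-dimensional space with the three listed properties is unique up to homeomorphism; this space is denoted $\mathbf{S}$. A semifilter (on $\omega$) is a collection $\mathcal{S}\subseteq\mathcal{P}(\omega)$ such that $\varnothing\notin\mathcal{S}$, $\omega\in\mathcal{S}$, $\mathcal{S}$ is closed under finite modifications, and $\mathcal{S}$ is upward-closed; it is viewed as a subspace of $2^\omega$ via characteristic functions. *)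

(* Defs.v *)
From Stdlib Require Import Reals List.
Open Scope R_scope.

(** Points of the Cantor space 2^omega (= characteristic functions of subsets of omega). *)
Definition Cantor := nat -> bool.

Definition cset := Cantor -> Prop.

Definition agree (n : nat) (x y : Cantor) : Prop := forall k, (k < n)%nat -> x k = y k.

Definition open (U : cset) : Prop :=
  forall x, U x -> exists n, forall y, agree n x y -> U y.

Definition rel_open (X U : cset) : Prop :=
  (forall x, U x -> X x) /\
  (forall x, U x -> exists n, forall y, X y -> agree n x y -> U y).

Definition rel_clopen (X U : cset) : Prop :=
  rel_open X U /\ rel_open X (fun x => X x /\ ~ U x).

Definition zero_dimensional (X : cset) : Prop :=
  forall x U, rel_open X U -> U x ->
    exists V, rel_clopen X V /\ V x /\ (forall y, V y -> U y).

Definition compact (K : cset) : Prop :=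
  forall (I : Type) (F : I -> cset),
    (forall i, open (F i)) ->
    (forall x, K x -> exists i, F i x) ->
    exists l : list I, forall x, K x -> exists i, In i l /\ F i x.

Definition sigma_compact (X : cset) : Prop :=
  exists K : nat -> cset, (forall n, compact (K n)) /\
    (forall x, X x <-> exists n, K n x).

(** Countable (possibly finite or empty). *)
Definition countable (X : cset) : Prop :=
  exists f : nat -> Cantor, forall x, X x -> exists n, f n = x.

Definition completely_metrizable (X : cset) : Prop :=
  exists d : Cantor -> Cantor -> R,
    (forall x y, X x -> X y -> 0 <= d x y) /\
    (forall x y, X x -> X y -> (d x y = 0 <-> x = y)) /\
    (forall x y, X x -> X y -> d x y = d y x) /\
    (forall x y z, X x -> X y -> X z -> d x z <= d x y + d y z) /\
    (forall U, (forall x, U x -> X x) ->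
       (rel_open X U <->
        forall x, U x -> exists eps, 0 < eps /\
          forall y, X y -> d x y < eps -> U y)) /\
    (forall s : nat -> Cantor, (forall n, X (s n)) ->
       (forall eps, 0 < eps -> exists N, forall m n, (N <= m)%nat -> (N <= n)%nat ->
          d (s m) (s n) < eps) ->
       exists x, X x /\ forall eps, 0 < eps -> exists N, forall n, (N <= n)%nat ->
          d (s n) x < eps).

Definition union_of (P Q : cset -> Prop) (X : cset) : Prop :=
  exists A B, P A /\ Q B /\ (forall x, X x <-> A x \/ B x).

Definition nowhere (P : cset -> Prop) (X : cset) : Prop :=
  (exists x, X x) /\
  forall U, rel_open X U -> (exists x, U x) -> ~ P U.

(** The defining properties of van Mill's space S (unique up to homeomorphism
    among separable metrizable spaces; every subspace of 2^omega is separable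
    metrizable). *)
Definition is_S (X : cset) : Prop :=
  zero_dimensional X /\
  union_of completely_metrizable sigma_compact X /\
  nowhere sigma_compact X /\
  nowhere (union_of completely_metrizable countable) X.

(** Semifilters on omega, viewed as subspaces of 2^omega. *)
Definition semifilter (S : cset) : Prop :=
  ~ S (fun _ => false) /\
  S (fun _ => true) /\
  (forall x y, S x -> (exists N, forall n, (N <= n)%nat -> x n = y n) -> S y) /\
  (forall x y, S x -> (forall n, x n = true -> y n = true) -> S y).

(* Main.v *)
Require Import Defs.
From Stdlib Require Import Reals List.
From Stdlib Require Import Lra Lia Arith Classical ClassicalEpsilon FunctionalExtensionality.
Open Scope nat_scope.

Lemma agree_refl n x : agree n x x.
Proof. intros k _; reflexivity. Qed.
Lemma agree_sym n x y : agree n x y -> agree n y x.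
Proof. intros H k Hk; symmetry; auto. Qed.
Lemma agree_trans n x y z : agree n x y -> agree n y z -> agree n x z.
Proof. intros H1 H2 k Hk; rewrite H1, H2; auto. Qed.
Lemma agree_le m n x y : (m <= n)%nat -> agree n x y -> agree m x y.
Proof. intros Hm H k Hk; apply H; lia. Qed.

Lemma mod3 a r : (r < 3)%nat -> (3*a+r) mod 3 = r.
Proof. intros. pose proof (Nat.div_mod_eq (3*a+r) 3). pose proof (Nat.mod_upper_bound (3*a+r) 3). lia. Qed.
Lemma div3 a r : (r < 3)%nat -> (3*a+r) / 3 = a.
Proof. intros. pose proof (Nat.div_mod_eq (3*a+r) 3). pose proof (Nat.mod_upper_bound (3*a+r) 3). lia. Qed.

Definition mx (l : list nat) := fold_right max 0%nat l.
Lemma In_mx a l : In a l -> (a <= mx l)%nat.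
Proof. induction l; simpl; intros H; [destruct H|]. destruct H; subst; [lia|]. specialize (IHl H); lia. Qed.

Definition inb (k : nat) (l : list nat) : bool := existsb (Nat.eqb k) l.
Lemma inb_true k l : inb k l = true <-> In k l.
Proof. unfold inb; rewrite existsb_exists; split.
 - intros [y [H1 H2]]; apply Nat.eqb_eq in H2; subst; auto.
 - intros H; exists k; split; auto; apply Nat.eqb_refl. Qed.
Lemma inb_false k l : (mx l < k)%nat -> inb k l = false.
Proof. intros H. destruct (inb k l) eqn:E; auto. apply inb_true, In_mx in E; lia. Qed.

Definition Ainf (x : Cantor) : Prop := forall N, exists a, (N <= 3*a)%nat /\ x (3*a)%nat = true.
Definition Bcof (x : Cantor) : Prop := exists N, forall a, (N <= 3*a+1)%nat -> x (3*a+1)%nat = true.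
Definition SS : cset := fun x => Ainf x \/ Bcof x.

Lemma SS_semifilter : semifilter SS.
Proof.
  split; [|split; [|split]].
  - intros [H|[N H]].
    + destruct (H 0%nat) as [a [_ Ha]]; discriminate.
    + specialize (H N ltac:(lia)); discriminate.
  - left; intros N; exists N; split; [lia|reflexivity].
  - intros x y [H|[N0 H]] [N HN].
    + left; intros M. destruct (H (max M N)) as [a [Ha1 Ha2]]. exists a; split; [lia|].
      rewrite <- HN by lia; auto.
    + right; exists (max N0 N); intros a Ha. rewrite <- HN by lia. apply H; lia.
  - intros x y [H|[N0 H]] Hxy.
    + left; intros M. destruct (H M) as [a [Ha1 Ha2]]; eauto.
    + right; exists N0; intros a Ha; auto.
Qed.

Lemma zd (X : cset) : zero_dimensional X.
Proof.
  intros x U [HUX HU] Ux. destruct (HU x Ux) as [n Hn].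
  exists (fun y => X y /\ agree n x y). split; [|split].
  - split.
    + split. { intros y [Hy _]; auto. }
      intros y [Xy Hy]. exists n. intros z Xz Hz. split; auto. eapply agree_trans; eauto.
    + split. { intros y [Hy _]; auto. }
      intros y [Xy Hy]. exists n. intros z Xz Hz. split; auto. intros [_ Hz'].
      apply Hy. split; auto. eapply agree_trans; eauto. apply agree_sym; auto.
  - split; [apply HUX; auto| apply agree_refl].
  - intros y [Xy Hy]; apply Hn; auto.
Qed.

Definition closedc (K : cset) := forall x, ~ K x -> exists L, forall y, agree L x y -> ~ K y.

Definition upd (p : Cantor) (m : nat) (b : bool) : Cantor := fun k => if Nat.eqb k m then b else p k.

Fixpoint gseq (bad : nat -> Cantor -> Prop) (m : nat) : Cantor :=
  match m with
  | O => fun _ => false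
  | S m' => if excluded_middle_informative (bad (S m') (upd (gseq bad m') m' false))
            then upd (gseq bad m') m' false else upd (gseq bad m') m' true
  end.

Lemma upd_agree p m b : agree m p (upd p m b).
Proof. intros k Hk; unfold upd. destruct (Nat.eqb_spec k m); [lia|auto]. Qed.

Lemma gseq_agree bad m d : agree m (gseq bad m) (gseq bad (m+d)).
Proof.
  induction d. { rewrite Nat.add_0_r; apply agree_refl. }
  rewrite Nat.add_succ_r. eapply agree_trans; [apply IHd|]. simpl.
  apply (agree_le m (m+d)); [lia|].
  destruct excluded_middle_informative; apply upd_agree.
Qed.

Definition xlim bad : Cantor := fun k => gseq bad (S k) k.

Lemma xlim_agree bad m : agree m (gseq bad m) (xlim bad).
Proof.
  intros k Hk. unfold xlim. pose proof (gseq_agree bad (S k) (m - S k)) as H.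
  replace (S k + (m - S k))%nat with m in H by lia. symmetry; apply H; lia.
Qed.

Lemma closed_compact K : closedc K -> Defs.compact K.
Proof.
  intros HK I F Fo Fc. apply NNPP; intro Hno.
  set (bad := fun m p => ~ exists l : list I, forall y, K y -> agree m p y -> exists i, In i l /\ F i y).
  assert (Hb : forall m, bad m (gseq bad m)).
  { induction m.
    - intros [l Hl]. apply Hno. exists l. intros y Ky. apply Hl; auto. intros k Hk; lia.
    - simpl. destruct excluded_middle_informative as [E|E]; auto.
      intros [l2 Hl2]. apply E. intros [l1 Hl1]. apply IHm. exists (l1 ++ l2).
      intros y Ky Hy. destruct (y m) eqn:Ym.
      + destruct (Hl2 y Ky) as [i [Hi1 Hi2]].
        { intros k Hk. unfold upd. destruct (Nat.eqb_spec k m); subst; auto. apply Hy; lia. }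
        exists i; split; auto; apply in_or_app; auto.
      + destruct (Hl1 y Ky) as [i [Hi1 Hi2]].
        { intros k Hk. unfold upd. destruct (Nat.eqb_spec k m); subst; auto. apply Hy; lia. }
        exists i; split; auto; apply in_or_app; auto. }
  set (x := xlim bad).
  assert (Kx : K x).
  { apply NNPP; intro nK. destruct (HK x nK) as [L HL]. apply (Hb L). exists nil.
    intros y Ky Hy. exfalso. apply (HL y); auto. eapply agree_trans; [|apply Hy].
    apply agree_sym, xlim_agree. }
  destruct (Fc x Kx) as [i Fi]. destruct (Fo i x Fi) as [n Hn].
  apply (Hb n). exists (i :: nil). intros y Ky Hy. exists i; split; [left; auto|].
  apply Hn. eapply agree_trans; [|apply Hy]. apply agree_sym, xlim_agree.
Qed.

Lemma compact_sep K z : Defs.compact K -> ~ K z -> exists L, forall w, agree L z w -> ~ K w.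
Proof.
  intros HK nz.
  destruct (HK nat (fun L w => ~ agree L z w)) as [l Hl].
  - intros L w Hw. exists L. intros y Hy Hzy. apply Hw. eapply agree_trans; eauto. apply agree_sym; auto.
  - intros w Kw. assert (z <> w) by (intro; subst; auto).
    apply NNPP; intro H1. apply H. apply functional_extensionality. intro k.
    apply NNPP; intro H2. apply H1. exists (S k). intro H3. apply H2, H3; lia.
  - exists (mx l). intros w Hw Kw. destruct (Hl w Kw) as [i [Hi1 Hi2]]. apply Hi2.
    apply (agree_le i (mx l)); auto. apply In_mx; auto.
Qed.
Open Scope nat_scope.

Lemma Bcof_sc : sigma_compact Bcof.
Proof.
  exists (fun N x => forall a, N <= 3*a+1 -> x (3*a+1) = true). split.
  - intros N. apply closed_compact. intros x Hx.
    assert (exists a, N <= 3*a+1 /\ x (3*a+1) = false) as [a [Ha1 Ha2]].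
    { apply NNPP; intro H. apply Hx. intros a Ha. destruct (x (3*a+1)) eqn:E; auto.
      exfalso; apply H; eauto. }
    exists (S (3*a+1)). intros y Hy Ny. specialize (Ny a Ha1). rewrite <- Hy in Ny by lia. congruence.
  - intros x; split; intros [N H]; exists N; auto.
Qed.

Fixpoint cnt (x : Cantor) (m : nat) : nat :=
  match m with
  | O => O
  | S m' => cnt x m' + (if andb (Nat.eqb (m' mod 3) 0) (x m') then 1 else 0)
  end.

Lemma cnt_S x m : cnt x (S m) = cnt x m + (if andb (Nat.eqb (m mod 3) 0) (x m) then 1 else 0).
Proof. reflexivity. Qed.

Lemma cnt_mono x m d : cnt x m <= cnt x (m + d).
Proof. induction d; [rewrite Nat.add_0_r; lia|]. rewrite Nat.add_succ_r; simpl; lia. Qed.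
Lemma cnt_mono' x m m' : m <= m' -> cnt x m <= cnt x m'.
Proof. intros H. replace m' with (m + (m' - m)) by lia. apply cnt_mono. Qed.
Lemma cnt_le x m : cnt x m <= m.
Proof. induction m; simpl; [lia|]. destruct (andb _ _); lia. Qed.
Lemma cnt_agree x y m : agree m x y -> cnt x m = cnt y m.
Proof. induction m; simpl; intros H; auto. rewrite IHm by (apply (agree_le m (S m)); auto).
  rewrite (H m) by lia. reflexivity. Qed.

Lemma cnt_unb x : Ainf x -> forall J, exists L, J <= cnt x L.
Proof.
  intros H J. induction J. { exists 0; lia. }
  destruct IHJ as [L HL]. destruct (H L) as [a [Ha1 Ha2]]. exists (S (3*a)). rewrite cnt_S.
  rewrite Ha2. assert (E : (3*a) mod 3 = 0) by (pose proof (mod3 a 0); rewrite Nat.add_0_r in H0; auto). rewrite E. simpl.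
  replace (a + (a + (a + 0))) with (3*a) by lia. pose proof (cnt_mono' x L (3*a) Ha1). lia.
Qed.

Lemma cnt_gap x N L : cnt x N < cnt x L -> exists k, N <= k < L /\ k mod 3 = 0 /\ x k = true.
Proof.
  induction L; intros H. { simpl in H; lia. }
  rewrite cnt_S in H.
  destruct (le_lt_dec (S L) N). { pose proof (cnt_mono' x (S L) N l). rewrite cnt_S in H0. lia. }
  destruct (Nat.eqb_spec (L mod 3) 0); destruct (x L) eqn:E; simpl in H.
  - destruct (le_lt_dec N L). { exists L; repeat split; auto; lia. }
    pose proof (cnt_mono' x L N ltac:(lia)). lia.
  - destruct IHL as [k Hk]; [lia|]. exists k; intuition lia.
  - destruct IHL as [k Hk]; [lia|]. exists k; intuition lia.
  - destruct IHL as [k Hk]; [lia|]. exists k; intuition lia.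
Qed.

Lemma cnt_inf x : (forall J, exists L, J <= cnt x L) -> Ainf x.
Proof.
  intros H N. destruct (H (S (cnt x N))) as [L HL].
  destruct (cnt_gap x N L ltac:(lia)) as [k [Hk1 [Hk2 Hk3]]].
  exists (k / 3). pose proof (Nat.div_mod_eq k 3). rewrite Hk2 in H0.
  replace (3 * (k/3)) with k by lia. split; auto; lia.
Qed.

Lemma least_ex (P : nat -> Prop) : (exists n, P n) -> exists n, P n /\ forall m, P m -> n <= m.
Proof.
  intros [n Hn]. induction n as [n IH] using (well_founded_induction lt_wf).
  destruct (classic (exists m, m < n /\ P m)) as [[m [Hm1 Hm2]]|Hno].
  - apply (IH m); auto.
  - exists n; split; auto. intros m Hm. destruct (le_lt_dec n m); auto. exfalso; eauto.
Qed.

Definition delta (x y : Cantor) : nat :=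
  match excluded_middle_informative (exists k, x k <> y k) with
  | left H => proj1_sig (constructive_indefinite_description _ (least_ex _ H))
  | right _ => 0
  end.

Lemma neq_ex (x y : Cantor) : x <> y -> exists k, x k <> y k.
Proof. intros H. apply NNPP; intro H1. apply H, functional_extensionality. intro k.
  apply NNPP; intro; eauto. Qed.

Lemma delta_spec x y : x <> y -> x (delta x y) <> y (delta x y) /\ agree (delta x y) x y.
Proof.
  intros H. pose proof (neq_ex x y H) as E. unfold delta.
  destruct excluded_middle_informative as [E'|E']; [|contradiction].
  destruct constructive_indefinite_description as [d [Hd Hmin]]; simpl. split; auto.
  intros k Hk. apply NNPP; intro Hk'. specialize (Hmin k Hk'); lia.
Qed.

Lemma delta_uniq x y d d' : x d <> y d -> agree d x y -> x d' <> y d' -> agree d' x y -> d = d'.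
Proof. intros H1 H2 H3 H4. destruct (lt_eq_lt_dec d d') as [[L|L]|L]; auto.
  - exfalso; apply H1, H4; auto.
  - exfalso; apply H3, H2; auto. Qed.

Open Scope R_scope.

Definition cdist (x y : Cantor) : R :=
  match excluded_middle_informative (x = y) with
  | left _ => 0
  | right _ => / INR (S (cnt x (delta x y)))
  end.

Lemma cdist_eq x : cdist x x = 0.
Proof. unfold cdist; destruct excluded_middle_informative; auto; congruence. Qed.
Lemma cdist_neq x y : x <> y -> cdist x y = / INR (S (cnt x (delta x y))).
Proof. intros H; unfold cdist; destruct excluded_middle_informative; auto; congruence. Qed.

Lemma invS_pos n : 0 < / INR (S n).
Proof. apply Rinv_0_lt_compat, lt_0_INR; lia. Qed.

Lemma invS_le p q : (p <= q)%nat -> / INR (S q) <= / INR (S p).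
Proof. intros H. apply Rinv_le_contravar. apply lt_0_INR; lia. apply le_INR; lia. Qed.

Lemma invS_lt p q : / INR (S q) < / INR (S p) -> (p < q)%nat.
Proof. intros H. destruct (le_lt_dec q p); auto. pose proof (invS_le q p l). lra. Qed.

Lemma cdist_nonneg x y : 0 <= cdist x y.
Proof. unfold cdist; destruct excluded_middle_informative; [lra|]. left; apply invS_pos. Qed.

Lemma cdist_zero x y : cdist x y = 0 <-> x = y.
Proof. split; intros H; [|subst; apply cdist_eq].
  apply NNPP; intro H'. rewrite cdist_neq in H by auto. pose proof (invS_pos (cnt x (delta x y))). lra. Qed.

Lemma cdist_large x y L j : agree L x y -> (j <= cnt x L)%nat -> cdist x y <= / INR (S j).
Proof.
  intros H1 H2. destruct (classic (x = y)) as [H0|H0]. { subst; rewrite cdist_eq; left; apply invS_pos. }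
  rewrite cdist_neq by auto. apply invS_le. destruct (delta_spec x y H0) as [D1 D2].
  destruct (le_lt_dec L (delta x y)). { pose proof (cnt_mono' x _ _ l). lia. }
  exfalso; apply D1, H1; auto.
Qed.

Lemma cdist_small x y j : cdist x y < / INR (S j) -> x = y \/ exists D, agree D x y /\ (j < cnt x D)%nat.
Proof.
  intros H. destruct (classic (x = y)); auto. right. rewrite cdist_neq in H by auto.
  exists (delta x y). split. apply delta_spec; auto. apply invS_lt in H; auto.
Qed.

Lemma cdist_sym x y : cdist x y = cdist y x.
Proof.
  destruct (classic (x = y)). { subst; auto. }
  rewrite !cdist_neq by auto. destruct (delta_spec x y H) as [A1 A2].
  assert (y <> x) by auto. destruct (delta_spec y x H0) as [B1 B2].
  assert (delta x y = delta y x) as E.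
  { apply (delta_uniq x y); auto. apply agree_sym; auto. }
  rewrite E. rewrite E in A2. rewrite (cnt_agree x y); auto.
Qed.

Lemma cdist_tri x y z : cdist x z <= cdist x y + cdist y z.
Proof.
  pose proof (cdist_nonneg x y); pose proof (cdist_nonneg y z).
  destruct (classic (x = y)). { subst; rewrite cdist_eq; lra. }
  destruct (classic (y = z)). { subst; rewrite cdist_eq; lra. }
  destruct (delta_spec x y H1) as [A1 A2]. destruct (delta_spec y z H2) as [B1 B2].
  destruct (le_lt_dec (delta x y) (delta y z)).
  - assert (cdist x z <= cdist x y); [|lra].
    rewrite (cdist_neq x y) by auto. apply (cdist_large _ _ (delta x y)); [|lia].
    eapply agree_trans; eauto. apply (agree_le _ (delta y z)); auto.
  - assert (cdist x z <= cdist y z); [|lra].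
    rewrite (cdist_neq y z) by auto. apply (cdist_large _ _ (delta y z)).
    + eapply agree_trans; eauto. apply (agree_le _ (delta x y)); auto; lia.
    + rewrite (cnt_agree x y); auto. apply (agree_le _ (delta x y)); auto; lia.
Qed.

Lemma arch_inv eps : 0 < eps -> exists j, / INR (S j) < eps.
Proof. intros H. destruct (archimed_cor1 eps H) as [N [H1 H2]]. exists (pred N).
  replace (S (pred N)) with N by lia. auto. Qed.
Open Scope nat_scope.

Lemma choice_fun {B C : Type} (P : B -> C -> Prop) : (forall n, exists a, P n a) -> exists f, forall n, P n (f n).
Proof. intros H. exists (fun n => proj1_sig (constructive_indefinite_description _ (H n))). intros n. apply proj2_sig. Qed.

Fixpoint Nm (f : nat -> nat) (j : nat) : nat := match j with 0 => f 0 | S j' => max (Nm f j') (f (S j')) end.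
Lemma Nm_ge f j : f j <= Nm f j.
Proof. destruct j; simpl; lia. Qed.
Lemma Nm_mono f j d : Nm f j <= Nm f (j + d).
Proof. induction d; [rewrite Nat.add_0_r; lia|]. rewrite Nat.add_succ_r; simpl; lia. Qed.
Lemma Nm_mono' f j j' : j <= j' -> Nm f j <= Nm f j'.
Proof. intros H. replace j' with (j + (j' - j)) by lia. apply Nm_mono. Qed.

Lemma Ainf_cm : completely_metrizable Ainf.
Proof.
  exists cdist. split; [|split; [|split; [|split; [|split]]]].
  - intros; apply cdist_nonneg.
  - intros; apply cdist_zero.
  - intros; apply cdist_sym.
  - intros; apply cdist_tri.
  - intros U HU. split.
    + intros [HU1 HU2] x Ux. destruct (HU2 x Ux) as [n Hn]. exists (/ INR (S (cnt x n)))%R.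
      split; [apply invS_pos|]. intros y Ay Hd. apply Hn; auto.
      destruct (cdist_small x y _ Hd) as [E|[D [HD1 HD2]]]. { subst; apply agree_refl. }
      apply (agree_le n D); auto. destruct (le_lt_dec n D); auto.
      pose proof (cnt_mono' x D n ltac:(lia)). lia.
    + intros H. split; auto. intros x Ux. destruct (H x Ux) as [eps [Heps Hb]].
      destruct (arch_inv eps Heps) as [j Hj]. destruct (cnt_unb x (HU x Ux) j) as [L HL].
      exists L. intros y Ay Hxy. apply Hb; auto. pose proof (cdist_large x y L j Hxy HL). lra.
  - intros s Hs HC.
    assert (HC' : forall j, exists N, forall m n, N <= m -> N <= n -> (cdist (s m) (s n) < / INR (S j))%R).
    { intros j. apply HC, invS_pos. }
    destruct (choice_fun _ HC') as [f Hf].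
    assert (Hag : forall j m n, f j <= m -> f j <= n -> agree j (s m) (s n)).
    { intros j m n Hm Hn. destruct (cdist_small _ _ _ (Hf j m n Hm Hn)) as [E|[D [HD1 HD2]]].
      - rewrite E; apply agree_refl.
      - apply (agree_le j D); auto. pose proof (cnt_le (s m) D). lia. }
    set (x := fun k => s (Nm f (S k)) k).
    assert (conv : forall L n, Nm f L <= n -> agree L (s n) x).
    { intros L n Hn k Hk. unfold x. apply (Hag (S k)); [|apply Nm_ge|lia].
      pose proof (Nm_ge f (S k)). pose proof (Nm_mono' f (S k) L Hk). lia. }
    assert (Ax : Ainf x).
    { apply cnt_inf. intros J. set (p := f J).
      destruct (cnt_unb (s p) (Hs p) (S J)) as [L0 HL0].
      set (m := max p (Nm f L0)).
      assert (A1 : agree L0 (s m) x) by (apply conv; unfold m; lia).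
      destruct (cdist_small (s p) (s m) J (Hf J p m ltac:(unfold p; lia) ltac:(unfold m, p; lia)))
        as [E|[D [HD1 HD2]]].
      - exists L0. rewrite E in HL0. rewrite <- (cnt_agree _ _ _ A1). lia.
      - exists (min D L0).
        assert (A2 : agree (min D L0) x (s p)).
        { apply agree_sym. eapply agree_trans.
          - apply (agree_le _ D); [lia|exact HD1].
          - apply (agree_le _ L0); [lia|exact A1]. }
        rewrite (cnt_agree _ _ _ A2). destruct (Nat.min_spec D L0) as [[_ E]|[_ E]]; rewrite E; lia. }
    exists x. split; auto. intros eps Heps. destruct (arch_inv eps Heps) as [j Hj].
    destruct (cnt_unb x Ax j) as [L HL]. exists (Nm f L). intros n Hn.
    pose proof (conv L n Hn) as A. eapply Rle_lt_trans; [|exact Hj].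
    apply (cdist_large _ _ L); auto. rewrite (cnt_agree _ _ _ A); auto.
Qed.
Open Scope nat_scope.

Fixpoint qs (np : nat -> list nat -> nat) (j : nat) : list nat :=
  match j with 0 => nil | S j' => qs np j' ++ (np j' (qs np j') :: nil) end.

Lemma qs_prefix np a i d : In a (qs np i) -> In a (qs np (i + d)).
Proof. induction d; [rewrite Nat.add_0_r; auto|]. rewrite Nat.add_succ_r. simpl. intros H. apply in_or_app; auto. Qed.

Lemma qs_prefix' np a i j : i <= j -> In a (qs np i) -> In a (qs np j).
Proof. intros H. replace j with (i + (j - i)) by lia. apply qs_prefix. Qed.

Section QS.
Variable np : nat -> list nat -> nat.
Hypothesis np_ge : forall j l, mx l < np j l /\ j < np j l.

Lemma qs_new a i d : In a (qs np (S i + d)) -> In a (qs np i) \/ np i (qs np i) <= a.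
Proof.
  induction d.
  - rewrite Nat.add_0_r. simpl. intros H. apply in_app_or in H. destruct H as [H|[H|[]]]; auto. right; lia.
  - rewrite Nat.add_succ_r. intros H. change (In a (qs np (S i + d) ++ (np (S i + d) (qs np (S i + d)) :: nil))) in H.
    apply in_app_or in H. destruct H as [H|[H|[]]]; auto. right. subst a.
    assert (In (np i (qs np i)) (qs np (S i + d))).
    { apply (qs_prefix' np _ (S i)); [lia|]. simpl; apply in_or_app; right; left; auto. }
    apply In_mx in H. pose proof (np_ge (S i + d) (qs np (S i + d))). lia.
Qed.

Lemma qs_in_self k j : In k (qs np j) -> In k (qs np (S k)).
Proof.
  intros H. destruct (le_lt_dec j (S k)). { eapply qs_prefix'; eauto. }
  replace j with (S k + (j - S k)) in H by lia. apply qs_new in H. destruct H as [H|H].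
  - apply (qs_prefix' np _ k); auto.
  - pose proof (np_ge k (qs np k)); lia.
Qed.
End QS.

Lemma SS_nsc : nowhere sigma_compact SS.
Proof.
  split. { exists (fun _ => true). left; intros N; exists N; split; [lia|auto]. }
  intros U [HU1 HU2] [x0 Ux0] [K [HK HKU]]. destruct (HU2 x0 Ux0) as [n Hn].
  set (z := fun (l : list nat) (k : nat) => if k <? n then x0 k else inb k l).
  assert (zS : forall l, ~ SS (z l)).
  { intros l [H|[N H]].
    - destruct (H (n + mx l + 1)) as [a [Ha1 Ha2]]. unfold z in Ha2.
      destruct (Nat.ltb_spec (3*a) n); [lia|]. rewrite inb_false in Ha2 by lia. discriminate.
    - specialize (H (N + n + mx l) ltac:(lia)). unfold z in H.
      destruct (Nat.ltb_spec (3*(N + n + mx l)+1) n); [lia|]. rewrite inb_false in H by lia. discriminate. }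
  assert (HL : forall p : nat * list nat, exists L, forall w, agree L (z (snd p)) w -> ~ K (fst p) w).
  { intros [m l]. apply compact_sep; auto. intros Km. apply (zS l), HU1, HKU. eauto. }
  destruct (choice_fun _ HL) as [Lf HLf].
  set (np := fun j l => 3 * (n + Lf (j, l) + mx l + j + 1)).
  assert (np_ge : forall j l, mx l < np j l /\ j < np j l) by (intros; unfold np; lia).
  set (y := fun k => if k <? n then x0 k else inb k (qs np (S k))).
  assert (yS : SS y).
  { left. intros N. exists (n + Lf (N, qs np N) + mx (qs np N) + N + 1). split; [lia|].
    unfold y. destruct (Nat.ltb_spec (3 * (n + Lf (N, qs np N) + mx (qs np N) + N + 1)) n); [lia|].
    apply inb_true. apply (qs_in_self np np_ge _ (S N)). simpl. apply in_or_app; right; left; auto. }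
  assert (yU : U y).
  { apply Hn; auto. intros k Hk. unfold y. destruct (Nat.ltb_spec k n); [auto|lia]. }
  destruct (proj1 (HKU y) yU) as [m Km].
  apply (HLf (m, qs np m) y); auto. simpl.
  intros k Hk. unfold z, y. destruct (Nat.ltb_spec k n); auto.
  destruct (inb k (qs np m)) eqn:E1; destruct (inb k (qs np (S k))) eqn:E2; auto.
  - apply inb_true in E1. apply (qs_in_self np np_ge) in E1. apply inb_true in E1. congruence.
  - apply inb_true in E2. exfalso. destruct (le_lt_dec (S k) m).
    + apply (qs_prefix' np _ _ m) in E2; auto. apply inb_true in E2; congruence.
    + replace (S k) with (S m + (k - m)) in E2 by lia. apply (qs_new np np_ge) in E2.
      destruct E2 as [E2|E2]. { apply inb_true in E2; congruence. }
      assert (Lf (m, qs np m) <= np m (qs np m)) by (unfold np at 2; lia). lia.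
Qed.
Open Scope nat_scope.

Lemma inb_app k l a : inb k (l ++ a :: nil) = orb (inb k l) (Nat.eqb k a).
Proof. unfold inb. rewrite existsb_app. simpl. rewrite Bool.orb_false_r. auto. Qed.

Lemma SS_ncc : nowhere (union_of completely_metrizable countable) SS.
Proof.
  split. { exists (fun _ => true). left; intros N; exists N; split; [lia|auto]. }
  intros U [HU1 HU2] [x0 Ux0] [A [B [[d Hd] [[f Hf] HAB]]]].
  destruct Hd as [dnn [dz [dsym [dtri [dtop dcomp]]]]].
  destruct (HU2 x0 Ux0) as [n Hn].
  set (P := fun (Z : list nat) (k : nat) =>
        if k <? n then x0 k else if Nat.eqb (k mod 3) 0 then false
        else if Nat.eqb (k mod 3) 1 then negb (inb k Z) else negb (f (k / 3 - n) k)).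
  assert (PS : forall Z, SS (P Z)).
  { intros Z. right. exists (n + mx Z + 1). intros a Ha. unfold P.
    destruct (Nat.ltb_spec (3*a+1) n); [lia|]. rewrite mod3 by lia. simpl.
    rewrite inb_false by lia. auto. }
  assert (PU : forall Z, U (P Z)).
  { intros Z. apply Hn; auto. intros k Hk. unfold P. destruct (Nat.ltb_spec k n); [auto|lia]. }
  assert (PA : forall Z, A (P Z)).
  { intros Z. destruct (proj1 (HAB (P Z)) (PU Z)) as [H|H]; auto. exfalso.
    destruct (Hf _ H) as [m Hm]. set (k := 3*(n+m)+2).
    assert (E : P Z k = negb (f m k)).
    { unfold P, k. destruct (Nat.ltb_spec (3*(n+m)+2) n); [lia|]. rewrite mod3 by lia. rewrite div3 by lia. replace (n + m - n) with m by lia. reflexivity. }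
    rewrite Hm in E. destruct (P Z k); discriminate. }
  assert (Ball : forall p eps, A p -> (0 < eps)%R -> exists L, forall y, A y -> agree L p y -> (d p y < eps)%R).
  { intros p eps Ap Heps.
    assert (Ho : rel_open A (fun y => A y /\ (d p y < eps)%R)).
    { apply dtop. { intros y [Hy _]; auto. }
      intros y [Ay Hy]. exists (eps - d p y)%R. split; [lra|]. intros z Az Hz. split; auto.
      pose proof (dtri p y z Ap Ay Az). lra. }
    destruct Ho as [_ Ho]. destruct (Ho p) as [L HL].
    { split; auto. rewrite (proj2 (dz p p Ap Ap) eq_refl). auto. }
    exists L. intros y Ay Hy. apply (HL y Ay Hy). }
  assert (HLb : forall q : list nat * nat, exists L, forall y, A y -> agree L (P (fst q)) y ->
                  (d (P (fst q)) y < (/2) ^ (S (snd q)))%R).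
  { intros [Z j]. apply Ball; auto. apply pow_lt. lra. }
  destruct (choice_fun _ HLb) as [Lb HLbs].
  set (np := fun j l => 3 * (n + Lb (l, j) + mx l + j + 1) + 1).
  assert (np_ge : forall j l, mx l < np j l /\ j < np j l) by (intros; unfold np; lia).
  set (p := fun j => P (qs np j)).
  assert (step : forall j, (d (p j) (p (S j)) < (/2) ^ (S j))%R).
  { intros j. apply (HLbs (qs np j, j)); [apply PA|]. simpl.
    intros k Hk. unfold p, P. simpl qs. rewrite inb_app.
    destruct (Nat.eqb_spec k (np j (qs np j))).
    { exfalso. assert (Lb (qs np j, j) < np j (qs np j)) by (unfold np at 2; lia). lia. }
    rewrite Bool.orb_false_r. auto. }
  assert (claim : forall k j, (d (p j) (p (j + k)%nat) < (/2) ^ j)%R).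
  { induction k; intros j.
    - rewrite Nat.add_0_r. rewrite (proj2 (dz (p j) (p j) (PA _) (PA _)) eq_refl). apply pow_lt; lra.
    - replace (j + S k) with (S j + k) by lia.
      pose proof (dtri (p j) (p (S j)) (p (S j + k)) (PA _) (PA _) (PA _)).
      pose proof (step j). pose proof (IHk (S j)). simpl in *. lra. }
  destruct (dcomp p (fun j => PA _)) as [x [Ax conv]].
  { intros eps Heps. destruct (pow_lt_1_zero (/2) ltac:(rewrite Rabs_pos_eq; lra) (eps/2) ltac:(lra)) as [N HN].
    exists N. intros m k Hm Hk. specialize (HN N (le_n N)). rewrite Rabs_pos_eq in HN by (apply pow_le; lra).
    pose proof (claim (m - N) N). pose proof (claim (k - N) N).
    replace (N + (m - N)) with m in * by lia. replace (N + (k - N)) with k in * by lia.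
    pose proof (dtri (p m) (p N) (p k) (PA _) (PA _) (PA _)).
    rewrite (dsym (p m) (p N) (PA _) (PA _)) in H1. lra. }
  assert (pw : forall k, exists N, forall m, N <= m -> agree k x (p m)).
  { intros k.
    assert (HC : rel_open A (fun y => A y /\ agree k x y)).
    { split. { intros y [Hy _]; auto. }
      intros y [Ay Hy]. exists k. intros z Az Hz. split; auto. eapply agree_trans; eauto. }
    pose proof (proj1 (dtop (fun y => A y /\ agree k x y) (fun (y : Cantor) (Hy : A y /\ agree k x y) => proj1 Hy)) HC) as HC2. destruct (HC2 x (conj Ax (agree_refl k x))) as [eps [Heps He]].
    destruct (conv eps Heps) as [N HN]. exists N. intros m Hm.
    apply (He (p m) (PA _)). rewrite dsym by (auto; apply PA). auto. }
  assert (xS : SS x) by (apply HU1, HAB; auto).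
  destruct xS as [H|[N H]].
  - destruct (H n) as [a [Ha1 Ha2]]. destruct (pw (S (3*a))) as [N HN].
    specialize (HN N (le_n N) (3*a) ltac:(lia)). rewrite Ha2 in HN. unfold p, P in HN.
    destruct (Nat.ltb_spec (3*a) n); [lia|].
    replace (3*a) with (3*a+0) in HN by lia. rewrite mod3 in HN by lia. discriminate.
  - set (a := n + Lb (qs np N, N) + mx (qs np N) + N + 1).
    assert (Ea : np N (qs np N) = 3*a+1) by reflexivity.
    specialize (H a ltac:(unfold a; lia)).
    destruct (pw (S (3*a+1))) as [M HM]. specialize (HM (max M (S N)) ltac:(lia) (3*a+1) ltac:(lia)).
    rewrite H in HM. unfold p, P in HM.
    destruct (Nat.ltb_spec (3*a+1) n); [unfold a in *; lia|]. rewrite mod3 in HM by lia. simpl in HM.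
    assert (Hin : In (3*a+1) (qs np (max M (S N)))).
    { apply (qs_prefix' np _ (S N)); [lia|]. simpl. apply in_or_app. right; left; auto. }
    apply inb_true in Hin. replace (a + (a + (a + 0))) with (3*a) in HM by lia. rewrite Hin in HM. discriminate.
Qed.

Theorem proposition5p3 : exists S : cset, semifilter S /\ is_S S.
Proof.
  exists SS. split; [apply SS_semifilter|].
  split; [apply zd|]. split; [|split; [apply SS_nsc|apply SS_ncc]].
  exists Ainf, Bcof. split; [apply Ainf_cm|]. split; [apply Bcof_sc|].
  intros x; unfold SS; tauto.
Qed.
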